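(* Let $N \ge \Delta \geq 2$ be integers. There exists a connected graph $G$ with $e(G)=N$, $\Delta(G)=\Delta$ and $e(L(G)) = f(N,\Delta)$; furthermore $n(G) \leq N+1$.
   Context: All graphs are finite and simple; $L(G)$ is the line graph of $G$; $n(\cdot)$, $e(\cdot)$, $\Delta(\cdot)$, $\delta(\cdot)$ denote number of vertices, number of edges, maximum degree and minimum degree. For integers $N \ge \Delta \ge 1$, $f(N,\Delta) = \max\{ e(L(G)) : e(G)=N, \Delta(G)=\Delta, \delta(G)\geq 1\}$, the maximum over all simple graphs $G$. *)

(* Defs.v *)
From mathcomp Require Import all_boot.
Unset Printing Implicit Defensive.

Record sgraph := SGraph {
  V : finType;
  adj : rel V;
  adj_sym : symmetric adj;
  adj_irr : irreflexive adj }.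
Arguments adj : clear implicits.

Definition nV (G : sgraph) : nat := #|V G|.

Definition Eset (G : sgraph) : {set {set V G}} :=
  [set [set x; y] | x in V G, y in V G & adj G x y].

Definition eG (G : sgraph) : nat := #|Eset G|.

Definition deg (G : sgraph) (v : V G) : nat := #|[set y | adj G v y]|.

(* Delta(G) (0 for the empty graph) *)
Definition maxdeg (G : sgraph) : nat := \max_(v : V G) deg G v.

Definition mindeg_ge1 (G : sgraph) : Prop := forall v : V G, 1 <= deg G v.

(* e(L(G)): number of edges of the line graph, i.e. unordered pairs of
   distinct edges of G sharing a vertex *)
Definition eL (G : sgraph) : nat :=
  #|[set [set a; b] | a in Eset G, b in Eset G & (a != b) && (a :&: b != set0)]|.

Definition connected (G : sgraph) : Prop :=
  forall x y : V G, connect (adj G) x y.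

(* the class over which f(N,Delta) is a maximum *)
Definition admissible (N D : nat) (G : sgraph) : Prop :=
  eG G = N /\ maxdeg G = D /\ mindeg_ge1 G.

Definition is_f (N D m : nat) : Prop :=
  (exists G, admissible N D G /\ eL G = m) /\
  (forall G, admissible N D G -> eL G <= m).

(* Main.v *)
Require Import Defs.
From mathcomp Require Import all_boot zify.
From Stdlib Require Import Classical.
Set Implicit Arguments. Unset Strict Implicit. Unset Printing Implicit Defensive.

Definition is2 (T : eqType) (x y u v : T) :=
  ((x == u) && (y == v)) || ((x == v) && (y == u)).

Lemma doubleton_eq (T : finType) (a b x y : T) : a != b ->
  ([set a; b] == [set x; y]) = is2 a b x y.
Proof.
move=> nab; apply/idP/idP.
- move/eqP=> E.
  have ha : a \in [set x; y] by rewrite -E set21.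
  have hb : b \in [set x; y] by rewrite -E set22.
  have hx : x \in [set a; b] by rewrite E set21.
  have hy : y \in [set a; b] by rewrite E set22.
  move: ha hb hx hy; rewrite !in_set2 /is2.
  case/orP=> /eqP ea; case/orP=> /eqP eb; subst; rewrite ?eqxx ?orbT //.
  + by rewrite eqxx in nab.
  + by rewrite eqxx in nab.
- rewrite /is2; case/orP=> /andP[/eqP-> /eqP->] //.
  by rewrite /= setUC.
Qed.

Lemma card_pairs (T : finType) (A : {pred T}) (R : rel T) :
  (forall x y, R x y -> R y x) -> (forall x, ~~ R x x) ->
  #|[set [set x; y] | x in A, y in A & R x y]| * 2 =
  #|[set p : T * T | [&& p.1 \in A, p.2 \in A & R p.1 p.2]]|.
Proof.
move=> Rs Ri.
set S := [set p : T * T | _].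
have -> : [set [set x; y] | x in A, y in A & R x y] = [set [set p.1; p.2] | p in S].
  apply/setP=> e; apply/imset2P/imsetP.
  - case=> x y xA; rewrite inE => /andP[yA rxy] ->.
    by exists (x,y) => //; rewrite inE /= xA yA rxy.
  - case=> [[x y]]; rewrite inE /= => /and3P[xA yA rxy] ->.
    by exists x y => //; rewrite inE yA.
rewrite -[RHS]sum1_card (partition_big_imset (fun p : T*T => [set p.1; p.2])) /=.
rewrite -sum_nat_const; apply: eq_bigr => e /imsetP[[x y] hp ->] /=.
move: hp; rewrite inE /= => /and3P[xA yA rxy].
have nxy : x != y by apply: contraTneq rxy => ->; apply: Ri.
rewrite sum1dep_card.
have -> : [set p | (p \in S) && ([set p.1; p.2] == [set x; y])] = [set (x,y); (y,x)].
  apply/setP=> [[a b]]; rewrite !inE /= !xpair_eqE.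
  apply/idP/idP.
  - case/andP=> /and3P[aA bA rab].
    have nab : a != b by apply: contraTneq rab => ->; apply: Ri.
    by rewrite doubleton_eq // /is2.
  - case/orP=> /andP[/eqP-> /eqP->].
    + by rewrite xA yA rxy eqxx.
    + by rewrite xA yA (Rs _ _ rxy) /= setUC eqxx.
by rewrite cards2 xpair_eqE negb_and nxy.
Qed.

Lemma card_split (T1 T2 : finType) (P : T1 -> T2 -> bool) :
  #|[set p : T1 * T2 | P p.1 p.2]| = \sum_(a : T1) #|[set b | P a b]|.
Proof.
rewrite -sum1dep_card -(pair_big_dep xpredT (fun a b => P a b) (fun _ _ => 1)) /=.
by apply: eq_bigr => a _; rewrite sum1dep_card.
Qed.

Lemma handshake (G : sgraph) : eG G * 2 = \sum_(v : V G) deg G v.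
Proof.
rewrite /eG /Eset card_pairs; last first.
- by move=> x; rewrite (adj_irr G).
- by move=> x y; rewrite (adj_sym G).
rewrite -card_split; apply: eq_card => p; rewrite !inE.
done.
Qed.

Lemma in_Eset (G : sgraph) (x y : V G) : adj G x y -> [set x; y] \in Eset G.
Proof. by move=> h; apply/imset2P; exists x y => //; rewrite inE. Qed.

Lemma EsetP (G : sgraph) (e : {set V G}) :
  e \in Eset G -> exists x y, adj G x y /\ e = [set x; y].
Proof. by case/imset2P=> x y _; rewrite inE => h ->; exists x, y. Qed.

Lemma adj_neq (G : sgraph) (x y : V G) : adj G x y -> x != y.
Proof. by apply: contraTneq => ->; rewrite (adj_irr G). Qed.

Lemma eL_formula (G : sgraph) :
  eL G * 2 = \sum_(v : V G) deg G v * (deg G v).-1.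
Proof.
rewrite /eL (@card_pairs _ _ (fun a b => (a != b) && (a :&: b != set0))); last first.
- by move=> x; rewrite eqxx.
- by move=> a b; rewrite eq_sym setIC.
set OP := [set p : {set V G} * {set V G} | _].
pose T3 := [set t : V G * (V G * V G) | [&& adj G t.1 t.2.1, adj G t.1 t.2.2 & t.2.1 != t.2.2]].
pose g := fun t : V G * (V G * V G) => ([set t.1; t.2.1], [set t.1; t.2.2]).
have -> : OP = [set g t | t in T3].
  apply/setP=> [[a b]]; rewrite inE /=; apply/idP/imsetP.
  - case/and3P=> /EsetP[x1 [y1 [h1 ->]]] /EsetP[x2 [y2 [h2 ->]]] /andP[nab].
    case/set0Pn=> v; rewrite inE !in_set2 => /andP[hv1 hv2].
    have [o1 [ho1 e1]] : exists o1, adj G v o1 /\ [set x1; y1] = [set v; o1].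
      case/orP: hv1 => /eqP ->; first by exists y1.
      by exists x1; split; [rewrite (adj_sym G) | rewrite setUC].
    have [o2 [ho2 e2]] : exists o2, adj G v o2 /\ [set x2; y2] = [set v; o2].
      case/orP: hv2 => /eqP ->; first by exists y2.
      by exists x2; split; [rewrite (adj_sym G) | rewrite setUC].
    exists (v, (o1, o2)); last by rewrite /g /= e1 e2.
    rewrite inE /= ho1 ho2 /=; apply: contra nab => /eqP eo.
    by rewrite e1 e2 eo.
  - case=> [[v [x y]]]; rewrite inE /= => /and3P[hx hy nxy] [-> ->].
    rewrite !in_Eset //= doubleton_eq ?adj_neq // /is2 eqxx /= (negbTE nxy) /=.
    rewrite (eq_sym x v) (negbTE (adj_neq hx)) andbF /=.
    by apply/set0Pn; exists v; rewrite inE !set21.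
rewrite card_in_imset; last first.
  move=> [v [x y]] [v' [x' y']]; rewrite !inE /= => /and3P[hx hy nxy] /and3P[hx' hy' nxy'].
  case=> /eqP e1 /eqP e2.
  move: e1 e2; rewrite !doubleton_eq ?adj_neq // /is2.
  have := adj_neq hx; have := adj_neq hy; have := adj_neq hx'; have := adj_neq hy'.
  move: nxy nxy'.
  move=> n1 n2 n3 n4 n5 n6.
  case/orP=> /andP[/eqP e1 /eqP e2]; case/orP=> /andP[/eqP e3 /eqP e4]; subst => //.
  all: try done.
  all: try by match goal with H : is_true (?a != ?a) |- _ => rewrite eqxx in H end.
apply: etrans (card_split (fun (v : V G) (p : V G * V G) =>
   [&& adj G v p.1, adj G v p.2 & p.1 != p.2])) _.
apply: eq_bigr => v _.
apply: etrans (card_split (fun x y => [&& adj G v x, adj G v y & x != y])) _.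
rewrite (eq_bigr (fun x => if adj G v x then (deg G v).-1 else 0)); last first.
  move=> x _; case: ifP => hx.
  - rewrite /deg (cardsD1 x [set y | adj G v y]) inE hx add1n /=.
    by apply: eq_card => y; rewrite !inE /= ?hx /= andbC eq_sym.
  - by apply/eqP; rewrite cards_eq0; apply/eqP/setP=> y; rewrite !inE /= ?hx.
by rewrite -big_mkcond /= sum_nat_const /deg; congr (_ * _); apply: eq_card => y; rewrite inE.
Qed.

Lemma maxdeg_le (G : sgraph) (v : V G) : deg G v <= maxdeg G.
Proof. exact: leq_bigmax. Qed.

Lemma maxdeg_ex (G : sgraph) : 0 < maxdeg G -> exists v, deg G v = maxdeg G.
Proof.
rewrite /maxdeg; case: (pickP (V G)) => [v0 _|none].
  by move=> _; exists [arg max_(i > v0) deg G i]; rewrite (bigmax_eq_arg v0).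
by rewrite big_pred0.
Qed.

Lemma maxdeg_eq (G : sgraph) D :
  (forall v, deg G v <= D) -> (exists v, deg G v = D) -> maxdeg G = D.
Proof.
move=> hle [v hv]; apply/eqP; rewrite eqn_leq; apply/andP; split.
  by apply/bigmax_leqP => i _; apply: hle.
by rewrite -hv; apply: maxdeg_le.
Qed.

Lemma is2C (T : eqType) (x y u v : T) : is2 x y u v = is2 y x u v.
Proof. by rewrite /is2 orbC !(andbC (x == _)). Qed.

Lemma is2xx (T : eqType) (x u v : T) : is2 x x u v -> u = v.
Proof. by rewrite /is2 => /orP[] /andP[/eqP <- /eqP <-]. Qed.

Lemma card_swap (T : finType) (P P' : pred T) p r :
  (forall y, P' y = (P y && (y != p)) || (y == r)) -> P p -> ~~ P r ->
  #|[set y | P' y]| = #|[set y | P y]|.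
Proof.
move=> hP Pp Pr.
have -> : [set y | P' y] = r |: ([set y | P y] :\ p).
  by apply/setP=> y; rewrite !inE hP orbC andbC.
rewrite cardsU1 !inE (negbTE Pr) andbF /= (cardsD1 p [set y | P y]) inE Pp.
by rewrite add1n.
Qed.

Lemma card_same (T : finType) (P P' : pred T) :
  (forall y, P' y = P y) -> #|[set y | P' y]| = #|[set y | P y]|.
Proof. by move=> h; apply: eq_card => y; rewrite !inE h. Qed.

Definition Pot (G : sgraph) := #|[set p : V G * V G | connect (adj G) p.1 p.2]|.

Lemma same_deg_eG (G H : sgraph) (f : V H -> V G) : bijective f ->
  (forall v, deg H v = deg G (f v)) -> eG H = eG G.
Proof.
move=> bf hd; apply/eqP; rewrite -(@eqn_pmul2r 2) // !handshake.
rewrite (reindex f) /=; last by apply: onW_bij.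
by apply/eqP/eq_bigr => v _; rewrite hd.
Qed.

Lemma same_deg_eL (G H : sgraph) (f : V H -> V G) : bijective f ->
  (forall v, deg H v = deg G (f v)) -> eL H = eL G.
Proof.
move=> bf hd; apply/eqP; rewrite -(@eqn_pmul2r 2) // !eL_formula.
rewrite (reindex f) /=; last by apply: onW_bij.
by apply/eqP/eq_bigr => v _; rewrite hd.
Qed.

Lemma same_deg_maxdeg (G H : sgraph) (f : V H -> V G) : bijective f ->
  (forall v, deg H v = deg G (f v)) -> maxdeg H = maxdeg G.
Proof.
move=> bf hd; rewrite /maxdeg (reindex f) /=; last by apply: onW_bij.
by apply/eq_bigr => v _; rewrite hd.
Qed.

Section Switch.
Variable G : sgraph.
Variables z q a b : V G.

Definition swr : rel (V G) := fun x y =>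
  (adj G x y && ~~ is2 x y z q && ~~ is2 x y a b) || is2 x y z a || is2 x y q b.

Lemma swr_sym : symmetric swr.
Proof. by move=> x y; rewrite /swr (adj_sym G) !(is2C x y). Qed.

Hypothesis nza : z != a.
Hypothesis nqb : q != b.

Lemma swr_irr : irreflexive swr.
Proof.
move=> x; rewrite /swr (adj_irr G) /=; apply/negP=> /orP[/is2xx/eqP|/is2xx/eqP].
  by rewrite (negbTE nza).
by rewrite (negbTE nqb).
Qed.

Definition swG := @SGraph (V G) swr swr_sym swr_irr.

Hypothesis hzq : adj G z q.
Hypothesis hab : adj G a b.
Hypothesis nc : ~~ connect (adj G) z a.

Let csym := sym_connect_sym (adj_sym G).

Lemma nconn_b : ~~ connect (adj G) z b.
Proof.
apply: contra nc => h; apply: connect_trans h _; apply: connect1; by rewrite (adj_sym G).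
Qed.


Lemma sw_deg v : deg swG v = deg G v.
Proof.
have nzq : z != q := adj_neq hzq.
have nab : a != b := adj_neq hab.
have nzb : z != b by apply: contraNneq nconn_b => ->.
have cq : connect (adj G) z q by apply: connect1.
have nqa : q != a by apply: contraNneq nc => <-.
have nzA : ~~ adj G z a by apply: contra nc => h; apply: connect1.
have nqB : ~~ adj G q b.
  apply: contra nconn_b => h; apply: connect_trans cq _; exact: connect1.
have E := (negbTE nzq, negbTE nab, negbTE nzb, negbTE nqa, negbTE nza, negbTE nqb).
have E' := (eq_sym q z, eq_sym b a, eq_sym b z, eq_sym a q, eq_sym a z, eq_sym b q).
have hqz : adj G q z by rewrite (adj_sym G).
have hba : adj G b a by rewrite (adj_sym G).
have nAz : ~~ adj G a z by rewrite (adj_sym G).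
have nBq : ~~ adj G b q by rewrite (adj_sym G).
rewrite /deg /=.
have [->|nvz] := eqVneq v z.
  apply: (card_swap (p := q) (r := a)) => // y.
  by rewrite /swr /is2 ?eqxx ?E' ?E /= ?andbT ?orbF.
have [->|nvq] := eqVneq v q.
  apply: (card_swap (p := z) (r := b)) => // y.
  by rewrite /swr /is2 ?eqxx ?E' ?E /= ?andbT ?orbF.
have [->|nva] := eqVneq v a.
  apply: (card_swap (p := b) (r := z)) => // y.
  by rewrite /swr /is2 ?eqxx ?E' ?E /= ?andbT ?orbF.
have [->|nvb] := eqVneq v b.
  apply: (card_swap (p := a) (r := q)) => // y.
  by rewrite /swr /is2 ?eqxx ?E' ?E /= ?andbT ?orbF.
apply: card_same => y.
by rewrite /swr /is2 (negbTE nvz) (negbTE nvq) (negbTE nva) (negbTE nvb) /= !andbT !orbF.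
Qed.

Hypothesis alt : connect (fun x y => adj G x y && ~~ is2 x y z q) q z.

Lemma sw_qz : connect (adj swG) q z.
Proof.
case/connectP: alt => p pp lp; apply/connectP; exists p => //.
have cq : connect (adj G) z q by apply: connect1.
apply: (@sub_in_path _ [pred y | (y != a) && (y != b)]); last exact: pp.
  move=> x y /andP[xa xb] _ /andP[hxy n1] /=.
  by rewrite /swr hxy n1 /is2 (negbTE xa) (negbTE xb).
apply/allP=> y yp; rewrite inE /=.
have cy : connect (adj G) z y.
  apply: connect_trans cq _.
  have := path_connect pp yp; apply: connect_sub => u w /andP[h _].
  exact: connect1.
apply/andP; split.
  by apply: contraNneq nc => <-.
by apply: contraNneq nconn_b => <-.
Qed.

Lemma sw_za : adj swG z a.
Proof. by rewrite /= /swr /is2 !eqxx /= orbT. Qed.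

Lemma sw_conn x y : connect (adj G) x y -> connect (adj swG) x y.
Proof.
have csym' := sym_connect_sym (adj_sym swG).
have hzq' : connect (adj swG) z q by rewrite csym'; exact: sw_qz.
have hab' : connect (adj swG) a b.
  apply: connect_trans (connect1 _) _; first by rewrite (adj_sym swG); exact: sw_za.
  apply: connect_trans hzq' (connect1 _).
  by rewrite /= /swr /is2 !eqxx /= !orbT.
apply: connect_sub => u w h.
case e1 : (is2 u w z q).
  by move: e1; rewrite /is2 => /orP[] /andP[/eqP-> /eqP->] //; exact: sw_qz.
case e2 : (is2 u w a b).
  by move: e2; rewrite /is2 => /orP[] /andP[/eqP-> /eqP->] //; rewrite csym'.
by apply: connect1; rewrite /= /swr h e1 e2.
Qed.

Lemma sw_Pot : Pot G < Pot swG.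
Proof.
apply: proper_card; apply/properP; split.
  by apply/subsetP=> [[x y]]; rewrite !inE /=; exact: sw_conn.
exists (z, a); first by rewrite inE /=; apply: connect1; exact: sw_za.
by rewrite inE /=.
Qed.

End Switch.

Lemma sum_two (T : finType) (F F' : T -> nat) (u w : T) : u != w ->
  (forall v, v != u -> v != w -> F' v = F v) ->
  \sum_v F' v + F u + F w = \sum_v F v + F' u + F' w.
Proof.
move=> nuw h.
have sp : forall H : T -> nat,
    \sum_v H v = H u + (H w + \sum_(v | (v != u) && (v != w)) H v).
  move=> H; rewrite (bigD1 u) //=; congr (_ + _).
  by rewrite (bigD1 w) //= eq_sym.
rewrite !sp (eq_bigr F) => [|v /andP[vu vw]]; last by rewrite h.
lia.
Qed.

Section LeafMove.
Variable G : sgraph.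
Variables l1 l2 t : V G.

Definition lmr : rel (V G) := fun x y =>
  (adj G x y && ~~ is2 x y l2 t) || is2 x y l1 t.

Lemma lmr_sym : symmetric lmr.
Proof. by move=> x y; rewrite /lmr (adj_sym G) !(is2C x y). Qed.

Hypothesis n1t : l1 != t.

Lemma lmr_irr : irreflexive lmr.
Proof.
move=> x; rewrite /lmr (adj_irr G) /=; apply/negP=> /is2xx/eqP.
by rewrite (negbTE n1t).
Qed.

Definition lmG := @SGraph (V G) lmr lmr_sym lmr_irr.

Hypothesis h2t : adj G l2 t.
Hypothesis n1T : ~~ adj G l1 t.
Hypothesis n12 : l1 != l2.

Lemma lm_deg_other v : v != l1 -> v != l2 -> deg lmG v = deg G v.
Proof.
move=> v1 v2.
have n2t : l2 != t := adj_neq h2t.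
have E := (negbTE n1t, negbTE n2t, negbTE n12, negbTE v1, negbTE v2).
rewrite /deg /=.
have [->|nvt] := eqVneq v t.
  apply: (card_swap (p := l2) (r := l1)) => //.
  - move=> y; rewrite /lmr /is2 !eqxx ?E.
    rewrite (eq_sym t l2) (eq_sym t l1) ?E /= ?andbT ?orbF; done.
  - by rewrite (adj_sym G).
  - by rewrite (adj_sym G).
apply: card_same => y.
by rewrite /lmr /is2 (negbTE v1) (negbTE v2) (negbTE nvt) /= !andbT !orbF.
Qed.

Lemma lm_deg1 : deg lmG l1 = (deg G l1).+1.
Proof.
have n2t : l2 != t := adj_neq h2t.
rewrite /deg /=.
have -> : [set y | lmr l1 y] = t |: [set y | adj G l1 y].
  apply/setP=> y; rewrite !inE /lmr /is2 eqxx (negbTE n12) (negbTE n1t) /=.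
  by rewrite andbT orbF orbC.
by rewrite cardsU1 inE n1T.
Qed.

Lemma lm_deg2 : deg lmG l2 = (deg G l2).-1.
Proof.
have n2t : l2 != t := adj_neq h2t.
rewrite /deg /=.
have -> : [set y | lmr l2 y] = [set y | adj G l2 y] :\ t.
  apply/setP=> y; rewrite !inE /lmr /is2 eqxx (negbTE n2t) (eq_sym l2 l1) (negbTE n12) /=.
  by rewrite ?andbT ?orbF andbC.
by rewrite [in RHS](cardsD1 t) inE h2t.
Qed.

End LeafMove.

Lemma sorted_tail (T : Type) (e : rel T) p1 q p2 :
  sorted e (p1 ++ q :: p2) -> path e q p2.
Proof.
elim: p1 => [|x p1 IH] //=.
by move/path_sorted; exact: IH.
Qed.

Definition rmE (G : sgraph) (z q : V G) : rel (V G) :=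
  fun x y => adj G x y && ~~ is2 x y z q.

Lemma alt_path (G : sgraph) (q z u u' : V G) p3 :
  uniq (q :: u :: u' :: p3) -> path (adj G) q (u :: u' :: p3) ->
  last u' p3 = z -> q != z -> connect (rmE z q) q z.
Proof.
move=> un pp lz nqz.
apply/connectP; exists (u :: u' :: p3) => //=.
have uz : u != z.
  move: un => /= /andP[_ /andP[nu _]].
  by apply: contraNneq nu => ->; rewrite -lz mem_last.
move: pp => /= /andP[hqu pp].
have h : path (rmE z q) u (u' :: p3).
  apply: (@sub_in_path _ [pred y | y != q]); last exact: pp.
    move=> x y xq yq hxy; rewrite /rmE hxy /is2.
    by rewrite (negbTE xq) (negbTE yq) /= andbF.
  apply/allP=> y yin; rewrite inE /=.
  move: un => /= /andP[nq _]; apply: contraNneq nq => e.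
  by subst.
move: h => /= ->; rewrite andbT.
by rewrite /rmE hqu /is2 (negbTE nqz) (negbTE uz) /= andbF.
Qed.

Lemma NB (G : sgraph) (s : V G) : 0 < deg G s ->
  (exists l, connect (adj G) s l /\ deg G l = 1) \/
  (exists z q, [/\ connect (adj G) s z, adj G z q & connect (rmE z q) q z]).
Proof.
move=> ds.
pose P k := [exists p : k.-tuple (V G), path (adj G) s p && uniq (s :: p)].
have P0 : P 0 by apply/existsP; exists [tuple] => /=.
have Pb : forall k, P k -> k <= #|V G|.
  move=> k /existsP[p /andP[_ u]]; have := max_card (mem (s :: p)).
  by rewrite (card_uniqP u) /= size_tuple => /ltnW.
case: (ex_maxnP (ex_intro _ 0 P0) Pb) => k Pk kmax.
case/existsP: Pk => tp /andP[pp up].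
case: tp pp up => p /= /eqP sz pp up.
have maxp : forall y, adj G (last s p) y -> y \in s :: p.
  move=> y hy; apply/negPn/negP => ny.
  have : P k.+1.
    apply/existsP; exists (@Tuple k.+1 _ (rcons p y) (introT eqP (etrans (size_rcons p y) (congr1 S sz)))).
    apply/andP; split; first by rewrite /= rcons_path pp hy.
    by change (uniq (rcons (s :: p) y)); rewrite rcons_uniq ny /= up.
  by move/kmax; rewrite ltnn.
have dz : 0 < deg G (last s p).
  move: pp {maxp}; case/lastP: p {sz up} => [|p' z0] //= pp.
  rewrite last_rcons; move: pp; rewrite rcons_path => /andP[_ h].
  by apply/card_gt0P; exists (last s p'); rewrite inE (adj_sym G).
set z := last s p.
have cz : connect (adj G) s z := path_connect pp (mem_last s p).
case: (ltngtP (deg G z) 1) => [lt1 | gt1 | eq1].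
- by move: dz; rewrite lt0n -leqn0 -ltnS lt1.
- right.
  have key : forall q, adj G z q ->
      (exists p1, s :: p = rcons (rcons p1 q) z) \/ connect (rmE z q) q z.
    move=> q hq.
    have qin := maxp q hq.
    have nqz : q != z by rewrite eq_sym; exact: adj_neq hq.
    have [p1 [p2 E]] : exists p1 p2, s :: p = p1 ++ q :: p2.
      by case/splitPr: qin => p1 p2; exists p1, p2.
    have lz : last q p2 = z.
      by rewrite /z; have := congr1 (last s) E; rewrite last_cat /= => ->.
    have pp2 : path (adj G) q p2.
      by apply: (@sorted_tail _ _ p1); rewrite -E.
    have up2 : uniq (q :: p2).
      have up' : uniq (s :: p) := up.
      by move: up'; rewrite E cat_uniq => /and3P[_ _].
    case: p2 E lz pp2 up2 => [|u [|u' p3]] E lz pp2 up2.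
    + by move: nqz; rewrite -lz eqxx.
    + left; exists p1; rewrite E -lz /= -cats1 -cats1 -catA //.
    + by right; apply: (@alt_path G q z u u' p3).
  case/card_gt1P: gt1 => q1 [q2 [h1 h2 n12]].
  rewrite !inE in h1 h2.
  case: (key q1 h1) => [[p1 E1]|a1]; last by exists z, q1; split.
  case: (key q2 h2) => [[p2 E2]|a2]; last by exists z, q2; split.
  move: E1; rewrite E2 => /rcons_inj [] /rcons_inj [] _ e.
  by rewrite e eqxx in n12.
- by left; exists z.
Qed.

Lemma sum_sub (T : finType) (P : pred T) (h : T -> nat) :
  \sum_(x : {x | P x}) h (val x) = \sum_(v | P v) h v.
Proof.
rewrite (eq_bigl (fun x => x \in [set: {x | P x}])); last by move=> x; rewrite inE.
rewrite -(big_imset _ (h := val)) /=; last by move=> x y _ _; apply: val_inj.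
apply: eq_bigl => v; apply/imsetP/idP => [[x _ ->]|Pv]; first exact: valP.
by exists (exist _ v Pv); rewrite ?inE.
Qed.

Section Del.
Variable G : sgraph.
Definition DT := {x : V G | 0 < deg G x}.
Definition delr : rel DT := fun x y => adj G (val x) (val y).
Lemma delr_sym : symmetric delr.
Proof. by move=> x y; rewrite /delr (adj_sym G). Qed.
Lemma delr_irr : irreflexive delr.
Proof. by move=> x; rewrite /delr (adj_irr G). Qed.
Definition delG := @SGraph DT delr delr_sym delr_irr.

Lemma del_deg (x : DT) : deg delG x = deg G (val x).
Proof.
rewrite /deg /= -(card_imset _ val_inj); apply: eq_card => y.
apply/imsetP/idP => [[w]|hy]; first by rewrite !inE => h ->.
have dy : 0 < deg G y.
  by apply/card_gt0P; exists (val x); rewrite inE (adj_sym G); move: hy; rewrite inE.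
exists (exist _ y dy) => //.
by rewrite inE /=; move: hy; rewrite inE.
Qed.

Lemma del_sum (F : nat -> nat) : F 0 = 0 ->
  \sum_(x : DT) F (deg delG x) = \sum_v F (deg G v).
Proof.
move=> F0.
rewrite (eq_bigr (fun x : DT => F (deg G (val x)))); last by move=> x _; rewrite del_deg.
rewrite (sum_sub (fun v => 0 < deg G v) (fun v => F (deg G v))).
rewrite big_mkcond /=; apply: eq_bigr => v _.
by case: ifP => // /negbT; rewrite -leqNgt leqn0 => /eqP ->; rewrite F0.
Qed.

Lemma del_eG : eG delG = eG G.
Proof.
apply/eqP; rewrite -(@eqn_pmul2r 2) // !handshake.
by rewrite (del_sum (F := id)).
Qed.

Lemma del_eL : eL delG = eL G.
Proof.
apply/eqP; rewrite -(@eqn_pmul2r 2) // !eL_formula.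
by rewrite (del_sum (F := fun d => d * d.-1)).
Qed.

Lemma del_maxdeg : 0 < maxdeg G -> maxdeg delG = maxdeg G.
Proof.
move=> m0; apply: maxdeg_eq.
  by move=> x; rewrite del_deg maxdeg_le.
case: (maxdeg_ex m0) => v hv.
have dv : 0 < deg G v by rewrite hv.
by exists (exist (fun x => 0 < deg G x) v dv : V delG); rewrite del_deg.
Qed.

Lemma del_min : mindeg_ge1 delG.
Proof. by move=> [v dv]; rewrite del_deg. Qed.
End Del.

Lemma sum_option (T : finType) (F : option T -> nat) :
  \sum_(y : option T) F y = F None + \sum_(x : T) F (Some x).
Proof.
rewrite (bigD1 None) //=; congr (_ + _).
rewrite (eq_bigr (fun x : T => F (Some x))) //.
rewrite (eq_bigl (fun x => x \in [set: T])); last by move=> x; rewrite inE.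
rewrite -(big_imset _ (h := Some)) /=; last by move=> x y _ _ [].
apply: eq_bigl => [[y|]]; last by apply/esym/imsetP => [[]].
by rewrite mem_imset ?inE //; move=> a b [].
Qed.

Section Pend.
Variable G : sgraph.
Variable u : V G.
Definition pr : rel (option (V G)) := fun x y =>
  match x, y with
  | Some a, Some b => adj G a b
  | Some a, None => a == u
  | None, Some b => b == u
  | None, None => false
  end.
Lemma pr_sym : symmetric pr.
Proof. by move=> [a|] [b|] //=; rewrite (adj_sym G). Qed.
Lemma pr_irr : irreflexive pr.
Proof. by move=> [a|] //=; rewrite (adj_irr G). Qed.
Definition pG := @SGraph (option (V G)) pr pr_sym pr_irr.

Lemma pG_degN : deg pG None = 1.
Proof.
rewrite /deg /= -(cards1 (Some u)); apply: eq_card => [[y|]]; by rewrite !inE.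
Qed.

Lemma pG_degS x : deg pG (Some x) = deg G x + (x == u).
Proof.
rewrite /deg /=.
have E : [set y | pr (Some x) y] =
   (if x == u then [set None] else set0) :|: (Some @: [set y | adj G x y]).
  apply/setP=> [[y|]]; rewrite !inE /=.
    rewrite mem_imset; last by move=> a b [].
    by case: (x == u); rewrite !inE.
  case: (x == u); rewrite !inE //=.
  by apply/esym/negP => /imsetP [].
rewrite E cardsU.
have -> : (if x == u then [set None] else set0) :&: (Some @: [set y | adj G x y]) = set0.
  apply/eqP; rewrite -subset0; apply/subsetP => w; rewrite inE => /andP[h1 h2].
  case: w h1 h2 => [y|] h1 h2; last by case/imsetP: h2.
  by move: h1; case: (x == u); rewrite ?inE.
rewrite cards0 subn0 card_imset; last by move=> a b [].
by case: (x == u); rewrite ?cards1 ?cards0 addnC.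
Qed.

Lemma pG_sum : eG pG = (eG G).+1.
Proof.
apply/eqP; rewrite -(@eqn_pmul2r 2) // handshake mulSn handshake.
rewrite sum_option pG_degN.
rewrite (eq_bigr (fun x => deg G x + (x == u))); last by move=> x _; rewrite pG_degS.
have h1 : \sum_(x : V G) ((x == u) : nat) = 1.
  by rewrite (bigD1 u) //= eqxx big1 // => x /negbTE ->.
rewrite big_split /= h1; apply/eqP; lia.
Qed.
End Pend.

Definition r0 : rel unit := fun _ _ => false.
Lemma r0_sym : symmetric r0. Proof. by []. Qed.
Lemma r0_irr : irreflexive r0. Proof. by []. Qed.
Definition G0 := @SGraph unit r0 r0_sym r0_irr.

Lemma G0_deg v : deg G0 v = 0.
Proof. by rewrite /deg /=; apply/eqP; rewrite cards_eq0; apply/eqP/setP => y; rewrite !inE. Qed.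

Lemma G0_eG : eG G0 = 0.
Proof.
apply/eqP; rewrite -(@eqn_pmul2r 2) // handshake mul0n.
by rewrite big1 // => v _; rewrite G0_deg.
Qed.

Lemma star k : exists G : sgraph, eG G = k /\
  exists c, deg G c = k /\ forall v, v != c -> deg G v <= 1.
Proof.
elim: k => [|k [G [eg [c [dc hv]]]]].
  exists G0; split; first exact: G0_eG.
  by exists tt; split; [rewrite G0_deg | move=> v; rewrite G0_deg].
exists (pG c); split; first by rewrite pG_sum eg.
exists (Some c); split; first by rewrite pG_degS dc eqxx addn1.
move=> [v|] nv; last by rewrite pG_degN.
have nvc : v != c by apply: contra nv => /eqP ->.
by rewrite pG_degS (negbTE nvc) addn0 hv.
Qed.

Lemma exists_A' N D : 2 <= D -> D <= N -> exists G : sgraph, eG G = N /\ maxdeg G = D.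
Proof.
move=> hD hDN.
have gen : forall j, exists G : sgraph, [/\ eG G = D + j, (forall v, deg G v <= D),
    (exists c, deg G c = D) & (exists w, deg G w <= 1)].
  elim=> [|j [G [eg hle [c hc] [w hw]]]].
    case: D hD {hDN} => [|k] // hk.
    have [G [eg [c [dc hv]]]] := star k.
    exists (pG c); split.
    - by rewrite pG_sum eg addn0.
    - move=> [v|]; last by rewrite pG_degN; apply: ltnW.
      rewrite pG_degS; have [->|nvc] := eqVneq v c; first by rewrite dc addn1.
      rewrite addn0; apply: leq_trans (hv _ nvc) _; by apply: ltnW.
    - by exists (Some c); rewrite pG_degS dc eqxx addn1.
    - by exists None; rewrite pG_degN.
  exists (pG w); split.
  - by rewrite pG_sum eg addnS.
  - move=> [v|]; last by rewrite pG_degN; apply: ltnW.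
    rewrite pG_degS; have [->|nvw] := eqVneq v w.
      by rewrite addn1; apply: leq_trans hD.
    by rewrite addn0.
  - exists (Some c); rewrite pG_degS.
    have ncw : c != w by apply: contraTneq hw => <-; rewrite hc -ltnNge.
    by rewrite (negbTE ncw) addn0.
  - by exists None; rewrite pG_degN.
have [G [eg hle hc _]] := gen (N - D).
exists G; split; first by rewrite eg subnKC.
exact: maxdeg_eq.
Qed.

Lemma conn_bound (G : sgraph) : connected G -> nV G <= (eG G).+1.
Proof.
move=> cG; rewrite /nV.
case: (pickP (V G)) => [r _|none]; last first.
  by rewrite (eq_card0 none).
pose Pk (y : V G) k := [exists p : k.-tuple (V G), path (adj G) r p && (last r p == y)].
have dex : forall y, exists k, Pk y k.
  move=> y; case/connectP: (cG r y) => p pp lp.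
  exists (size p); apply/existsP; exists (in_tuple p); by rewrite /= pp -lp eqxx.
pose d y := ex_minn (dex y).
have dP : forall y, Pk y (d y).
  by move=> y; rewrite /d; case: ex_minnP.
have dmin : forall y k, Pk y k -> d y <= k.
  by move=> y k; rewrite /d; case: ex_minnP => m _ h; apply: h.
have par : forall y, y != r -> exists p, adj G y p && (d p < d y).
  move=> y nyr; case/existsP: (dP y) => tp /andP[pp /eqP lp].
  case: tp pp lp => p /= /eqP sz; case/lastP: p sz => [|p' z] sz.
    by move=> _ lp; rewrite -lp eqxx in nyr.
  rewrite rcons_path last_rcons => /andP[pp' hz] ez; subst z.
  exists (last r p'); rewrite (adj_sym G) hz /=.
  have : Pk (last r p') (size p').
    by apply/existsP; exists (in_tuple p'); rewrite /= pp' eqxx.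
  by move/dmin; rewrite -sz size_rcons.
pose f y := odflt r [pick p | adj G y p && (d p < d y)].
have fP : forall y, y != r -> adj G y (f y) && (d (f y) < d y).
  move=> y nyr; rewrite /f; case: pickP => [p hp //|none].
  by case: (par y nyr) => p hp; rewrite none in hp.
have : #|[set y | y != r]| <= eG G.
  rewrite /eG -(card_in_imset (f := fun y => [set y; f y])).
    apply: subset_leq_card; apply/subsetP => e /imsetP[y]; rewrite inE => nyr ->.
    by apply: in_Eset; case/andP: (fP y nyr).
  move=> y y'; rewrite !inE => ny ny' /eqP.
  case/andP: (fP y ny) => hy dy; case/andP: (fP y' ny') => hy' dy'.
  rewrite doubleton_eq ?adj_neq // /is2 => /orP[/andP[/eqP -> _] //|/andP[/eqP e1 /eqP e2]].
  move: dy dy'; rewrite e2 -e1 => h1 h2.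
  by have := ltn_trans h1 h2; rewrite ltnn.
have -> : #|[set y | y != r]| = #|V G|.-1.
  by rewrite -(cardsC1 r); apply: eq_card => y; rewrite !inE.
by case: #|V G|.
Qed.

Lemma eL_bound (G : sgraph) : eL G <= 2 ^ eG G.
Proof.
rewrite /eG -card_powerset /eL; apply: subset_leq_card; apply/subsetP => e.
case/imset2P => a b ha; rewrite inE => /andP[hb _] ->.
by rewrite powersetE subUset !sub1set ha hb.
Qed.

Lemma nV_bound (G : sgraph) : mindeg_ge1 G -> #|V G| <= eG G * 2.
Proof.
move=> hm; rewrite handshake -sum1_card.
by apply: leq_sum => v _; apply: hm.
Qed.

Lemma Pot_bound (G : sgraph) : Pot G <= #|V G| * #|V G|.
Proof. by rewrite /Pot -card_prod; apply: max_card. Qed.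

Lemma ex_max (P : nat -> Prop) B : (exists k, P k) -> (forall k, P k -> k <= B) ->
  exists m, P m /\ forall k, P k -> k <= m.
Proof.
elim: B => [|B IH] [k Pk] hb.
  exists k; split => // k' Pk'; have := hb _ Pk'; have := hb _ Pk; lia.
case: (classic (P B.+1)) => [PB|nPB].
  by exists B.+1; split.
apply: IH; first by exists k.
move=> k' Pk'; have := hb _ Pk'; rewrite leq_eqVlt => /orP[/eqP e|//].
by subst; case: nPB.
Qed.

Lemma switch_better (G : sgraph) (z q a b : V G) :
  adj G z q -> adj G a b -> ~~ connect (adj G) z a -> connect (rmE z q) q z ->
  exists H : sgraph, [/\ eG H = eG G, maxdeg H = maxdeg G,
     (mindeg_ge1 G -> mindeg_ge1 H), eL H = eL G & Pot G < Pot H].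
Proof.
move=> hzq hab nc alt.
have nza : z != a by apply: contraNneq nc => ->; exact: connect0.
have nqb : q != b.
  apply: contraNneq nc => e; apply: connect_trans (connect1 hzq) _.
  by rewrite e; apply: connect1; rewrite (adj_sym G).
have hd := sw_deg (nza := nza) (nqb := nqb) hzq hab nc.
exists (swG nza nqb); split.
- apply/eqP; rewrite -(@eqn_pmul2r 2) // !handshake.
  by apply/eqP/eq_bigr => v _; rewrite hd.
- by rewrite /maxdeg; apply: eq_bigr => v _; rewrite hd.
- by move=> hm v; rewrite hd; apply: hm.
- apply/eqP; rewrite -(@eqn_pmul2r 2) // !eL_formula.
  by apply/eqP/eq_bigr => v _; rewrite hd.
- exact: sw_Pot.
Qed.

Lemma leaf_better (G : sgraph) (l1 l2 t : V G) :
  adj G l2 t -> ~~ adj G l1 t -> l1 != l2 -> l1 != t ->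
  deg G l1 = 1 -> deg G l2 = 1 -> 2 <= maxdeg G ->
  exists H : sgraph, [/\ eG H = eG G, maxdeg H = maxdeg G & eL H = (eL G).+1].
Proof.
move=> h2t n1T n12 n1t d1 d2 hm.
have ho := lm_deg_other n1t h2t n1T n12.
have h1 := lm_deg1 n1t h2t n1T n12.
have h2 := lm_deg2 n1t h2t n12.
exists (lmG l2 n1t); split.
- apply/eqP; rewrite -(@eqn_pmul2r 2) // !handshake.
  have := sum_two (F := deg G) (F' := deg (lmG l2 n1t)) n12 ho.
  rewrite h1 h2 d1 d2 /=; move=> e; apply/eqP; lia.
- apply: maxdeg_eq.
    move=> v; have [->|nv1] := eqVneq v l1; first by rewrite h1 d1.
    have [->|nv2] := eqVneq v l2; first by rewrite h2 d2.
    by rewrite ho // maxdeg_le.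
  have [u hu] := maxdeg_ex (leq_trans (isT : 0 < 2) hm).
  exists u.
  have nu1 : u != l1 by apply/eqP => e; move: hm; rewrite -hu e d1.
  have nu2 : u != l2 by apply/eqP => e; move: hm; rewrite -hu e d2.
  by rewrite ho.
- apply/eqP; rewrite -(@eqn_pmul2r 2) // eL_formula.
  have hG := eL_formula G.
  have := sum_two (F := fun v => deg G v * (deg G v).-1)
                  (F' := fun v => deg (lmG l2 n1t) v * (deg (lmG l2 n1t) v).-1) n12.
  rewrite h1 h2 d1 d2 /= => e.
  have e' := e (fun v n1 n2 => congr1 (fun d => d * d.-1) (ho v n1 n2)).
  move: e'; rewrite /= => e'.
  apply/eqP; lia.
Qed.

Unset Implicit Arguments.

Theorem mainTheorem10 (N D : nat) (hD : 2 <= D) (hND : D <= N) :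
  exists G : sgraph,
    [/\ connected G, eG G = N, maxdeg G = D, is_f N D (eL G) & nV G <= N.+1].
Proof.
have [m [[G1 [[eg1 md1] el1]] mmax]] :=
  @ex_max (fun k => exists G : sgraph, (eG G = N /\ maxdeg G = D) /\ eL G = k) (2 ^ N)
    (let: ex_intro G (conj e m') := exists_A' hD hND in ex_intro _ (eL G) (ex_intro _ G (conj (conj e m') erefl)))
    (fun k '(ex_intro G (conj (conj e _) el)) => eq_ind _ (fun k => k <= 2 ^ N)
        (eq_ind _ (fun n => eL G <= 2 ^ n) (eL_bound G) _ e) _ el).
have D0 : 0 < D by apply: ltnW.
have ex2 : exists k, exists G : sgraph, admissible N D G /\ eL G = m /\ Pot G = k.
  exists (Pot (delG G1)), (delG G1); split; last by split; rewrite // del_eL.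
  split; first by rewrite del_eG.
  split; last exact: del_min.
  by rewrite del_maxdeg md1.
have bd2 : forall k, (exists G : sgraph, admissible N D G /\ eL G = m /\ Pot G = k) ->
    k <= (N * 2) * (N * 2).
  move=> k [G [[e [_ mn]] [_ <-]]]; apply: leq_trans (Pot_bound G) _.
  by have := nV_bound mn; rewrite e => h; apply: leq_mul.
have [p [[G [[eg [md mn]] [elG pG]]] pmax]] := ex_max ex2 bd2.
have csym := sym_connect_sym (adj_sym G).
have cG : connected G.
  move=> x v; apply/idPn => nxv.
  case: (NB (mn x)) => [[l1 [cx1 d1]]|[z [q [cz hzq alt]]]]; last first.
    case/card_gt0P: (mn v) => w; rewrite inE => hvw.
    have nc : ~~ connect (adj G) z v by apply: contra nxv => h; apply: connect_trans cz h.
    have [H [eH mH minH lH pH]] := switch_better hzq hvw nc alt.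
    have : Pot H <= p.
      apply: pmax; exists H; split; last by split; rewrite ?lH.
      by split; [rewrite eH | split; [rewrite mH | exact: minH mn]].
    by rewrite leqNgt -pG pH.
  case: (NB (mn v)) => [[l2 [cv2 d2]]|[z [q [cz hzq alt]]]]; last first.
    case/card_gt0P: (mn x) => w; rewrite inE => hxw.
    have nc : ~~ connect (adj G) z x.
      by apply: contra nxv => h; rewrite csym; apply: connect_trans cz h.
    have [H [eH mH minH lH pH]] := switch_better hzq hxw nc alt.
    have : Pot H <= p.
      apply: pmax; exists H; split; last by split; rewrite ?lH.
      by split; [rewrite eH | split; [rewrite mH | exact: minH mn]].
    by rewrite leqNgt -pG pH.
  have n12c : ~~ connect (adj G) l1 l2.
    apply: contra nxv => h; apply: connect_trans cx1 _; apply: connect_trans h _.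
    by rewrite csym.
  case/card_gt0P: (mn l2) => t; rewrite inE => h2t.
  have n1T : ~~ adj G l1 t.
    apply: contra n12c => h; apply: connect_trans (connect1 h) _.
    by apply: connect1; rewrite (adj_sym G).
  have n12 : l1 != l2 by apply: contraNneq n12c => ->; exact: connect0.
  have n1t : l1 != t by apply: contraNneq n12c => ->; apply: connect1; rewrite (adj_sym G).
  have m2 : 2 <= maxdeg G by rewrite md.
  have [H [eH mH lH]] := leaf_better h2t n1T n12 n1t d1 d2 m2.
  have : eL H <= m by apply: mmax; exists H; split; [split; [rewrite eH | rewrite mH] | ].
  by rewrite lH elG ltnn.
exists G; split => //.
- split; first by exists G; split => //; split => //; split.
  move=> G' [e' [m' _]]; rewrite elG; apply: mmax; exists G'; by split.
- by rewrite -eg; apply: conn_bound.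
Qed.
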